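(* Let $k\ge0$ and $L\subseteq\mathrm{iiPoms}_{\le k}$. For $P\in\mathrm{iiPoms}_{\le k}$ let $P\backslash L=\{Q\in\mathrm{iiPoms}_{\le k}\mid S_Q=T_P,\ P*Q\in L\}$ and $\mathrm{suff}(L)=\{P\backslash L\mid P\in\mathrm{iiPoms}_{\le k}\}$. Then $\mathrm{suff}(L)$ is an $\mathrm{iiPoms}_{\le k}$-module via $\mathrm{src}(P\backslash L)=S_P$, $\mathrm{tgt}(P\backslash L)=T_P$, $(P\backslash L)\cdot Q=(P*Q)\backslash L$, and the triple $(\mathrm{suff}(L),J,\varphi)$ with $J=\{P\backslash L\mid P\in L\}$ and $\varphi(P)=P\backslash L$ recognizes $L$, i.e. $\varphi$ is a module homomorphism and $L=\varphi^{-1}(J)$. Moreover, for any $\mathrm{iiPoms}_{\le k}$-module $M$, subset $K\subseteq M$ and surjective module homomorphism $\psi:\mathrm{iiPoms}_{\le k}\to M$ with $L=\psi^{-1}(K)$, there is a module homomorphism $f:M\to\mathrm{suff}(L)$ such that $f(M)=\mathrm{suff}(L)$, $f(K)=J$ and $f\circ\psi=\varphi$.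
   Context: Fix a finite alphabet $\Sigma$. Pomsets $(P,<,\dashrightarrow,\lambda,S,T)$: $P$ finite, $<$ a strict partial interval order, $\dashrightarrow$ acyclic relating (in one direction) distinct $<$-incomparable elements, $\lambda:P\to\Sigma$, $S$/$T$ sets of $<$-minimal/maximal elements viewed as conclists (finite totally ordered labelled sets), up to isomorphism. $\mathrm{iiPoms}$ is the category with objects conclists, morphisms $U\to V$ the pomsets with source $U$ and target $V$, composition the gluing $P*Q$ (identify $T_P$ with $S_Q$; precedence $<_P\cup<_Q\cup(P\setminus T_P)\times(Q\setminus S_Q)$; event orders and labels united; source $S_P$, target $T_Q$), identities $\mathrm{id}_U=(U,\emptyset,\dashrightarrow,\lambda,U,U)$. $\mathrm{iiPoms}_{\le k}$: pomsets whose $<$-antichains have size $\le k$. A $\mathcal C$-module ($\mathcal C$ small category) is a set $M$ with $\mathrm{src},\mathrm{tgt}:M\to\mathrm{Ob}(\mathcal C)$ and actions $M(U,V)\times\mathcal C(V,W)\to M(U,W)$ ($M(U,V)=\mathrm{src}^{-1}(U)\cap\mathrm{tgt}^{-1}(V)$), $(m,\alpha)\mapsto m\cdot\alpha$, with $m\cdot\mathrm{id}_V=m$ and $(m\cdot\alpha)\cdot\beta=m\cdot(\alpha\beta)$ (composition written diagrammatically). A homomorphism preserves $\mathrm{src},\mathrm{tgt}$ and commutes with the action. $\mathrm{iiPoms}_{\le k}$ is a module over itself via $\mathrm{src}(P)=S_P$, $\mathrm{tgt}(P)=T_P$, $P\cdot Q=P*Q$. An element $P\backslash L$ of $\mathrm{suff}(L)$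 is understood as carrying its interfaces $(S_P,T_P)$, so that $\mathrm{src},\mathrm{tgt}$ are well defined. *)

(* Defs.v *)
From HB Require Import structures.
From mathcomp Require Import all_boot.
From Stdlib Require Import ClassicalEpsilon.

Set Implicit Arguments.
Unset Strict Implicit.
Unset Printing Implicit Defensive.

Record pom (Sigma : finType) := Pom {
  pev : finType;
  plt : rel pev;
  pevo : rel pev;
  plab : pev -> Sigma;
  pS : {set pev};
  pT : {set pev} }.

Arguments Pom {Sigma} pev plt pevo plab pS pT.
Arguments pev {Sigma} p.
Arguments plt {Sigma} p.
Arguments pevo {Sigma} p.
Arguments plab {Sigma} p.
Arguments pS {Sigma} p.
Arguments pT {Sigma} p.

Definition pom_iso (Sigma : finType) (P Q : pom Sigma) : Prop :=
  exists f : pev P -> pev Q, bijective f /\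
    (forall x y, plt Q (f x) (f y) = plt P x y) /\
    (forall x y, pevo Q (f x) (f y) = pevo P x y) /\
    (forall x, plab Q (f x) = plab P x) /\
    (forall x, (f x \in pS Q) = (x \in pS P)) /\
    (forall x, (f x \in pT Q) = (x \in pT P)).

Definition antichain (Sigma : finType) (P : pom Sigma) (A : {set pev P}) : bool :=
  [forall x in A, forall y in A, ~~ plt P x y].

(* P is an interval ipomset all of whose <-antichains have size <= k *)
Definition valid (Sigma : finType) (k : nat) (P : pom Sigma) : Prop :=
  irreflexive (plt P) /\ transitive (plt P) /\
  (* interval order (2+2-free) *)
  (forall w x y z, plt P w y -> plt P x z -> plt P w z || plt P x y) /\
  (forall x y, pevo P x y -> [&& x != y, ~~ plt P x y & ~~ plt P y x]) /\
  (forall x y, x != y -> ~~ plt P x y -> ~~ plt P y x -> pevo P x y || pevo P y x) /\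
  (forall x y, pevo P x y -> ~~ connect (pevo P) y x) /\
  (forall x, x \in pS P -> forall y, ~~ plt P y x) /\
  (forall x, x \in pT P -> forall y, ~~ plt P x y) /\
  (forall A : {set pev P}, antichain A -> #|A| <= k).

(* conclists up to isomorphism are words over Sigma; the conclist of an
   interface A is its list of labels ordered by the event order *)
Definition rank (Sigma : finType) (P : pom Sigma) (A : {set pev P}) (x : pev P) : nat :=
  #|[set z in A | pevo P z x]|.

Definition word (Sigma : finType) (P : pom Sigma) (A : {set pev P}) : seq Sigma :=
  map (plab P) (sort (fun x y => rank A x <= rank A y) (enum A)).

Definition gcar (Sigma : finType) (P Q : pom Sigma) : finType :=
  (pev P + {y : pev Q | y \notin pS Q})%type.

(* x in T_P corresponds to s in S_Q (same position in the conclists) *)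
Definition corr (Sigma : finType) (P Q : pom Sigma) (x : pev P) (s : pev Q) : bool :=
  [&& x \in pT P, s \in pS Q & rank (pT P) x == rank (pS Q) s].

Definition glt (Sigma : finType) (P Q : pom Sigma) (u v : gcar P Q) : bool :=
  match u, v with
  | inl x, inl x' => plt P x x' ||
      [exists s, exists s', [&& corr x s, corr x' s' & plt Q s s']]
  | inl x, inr y => (x \notin pT P) || [exists s, corr x s && plt Q s (val y)]
  | inr y, inl x => [exists s, corr x s && plt Q (val y) s]
  | inr y, inr y' => plt Q (val y) (val y')
  end.

Definition gevo (Sigma : finType) (P Q : pom Sigma) (u v : gcar P Q) : bool :=
  match u, v with
  | inl x, inl x' => pevo P x x' ||
      [exists s, exists s', [&& corr x s, corr x' s' & pevo Q s s']]
  | inl x, inr y => [exists s, corr x s && pevo Q s (val y)]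
  | inr y, inl x => [exists s, corr x s && pevo Q (val y) s]
  | inr y, inr y' => pevo Q (val y) (val y')
  end.

Definition glab (Sigma : finType) (P Q : pom Sigma) (u : gcar P Q) : Sigma :=
  match u with inl x => plab P x | inr y => plab Q (val y) end.

Definition gS (Sigma : finType) (P Q : pom Sigma) : {set gcar P Q} :=
  [set u | if u is inl x then x \in pS P else false].

Definition gT (Sigma : finType) (P Q : pom Sigma) : {set gcar P Q} :=
  [set u | match u with
           | inl x => [exists s, corr x s && (s \in pT Q)]
           | inr y => val y \in pT Q end].

Definition glue (Sigma : finType) (P Q : pom Sigma) : pom Sigma :=
  @Pom Sigma (gcar P Q) (@glt _ P Q) (@gevo _ P Q) (@glab _ P Q) (gS P Q) (gT P Q).

Definition idpom (Sigma : finType) (U : seq Sigma) : pom Sigma :=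
  @Pom Sigma 'I_(size U) (fun _ _ => false) (fun i j => (i < j)%N)
       (fun i => tnth (in_tuple U) i) setT setT.

Definition iipk (Sigma : finType) (k : nat) : Type :=
  { A : pom Sigma -> Prop | exists p, valid k p /\ A = pom_iso p }.

Definition rep (Sigma : finType) (k : nat) (a : iipk Sigma k) : pom Sigma :=
  proj1_sig (constructive_indefinite_description _ (proj2_sig a)).

Definition isrc (Sigma : finType) (k : nat) (a : iipk Sigma k) : seq Sigma :=
  word (pS (rep a)).
Definition itgt (Sigma : finType) (k : nat) (a : iipk Sigma k) : seq Sigma :=
  word (pT (rep a)).

(* composition (gluing) of classes; the fallback branch is only reached
   when the gluing is not in iiPoms_{<=k} (e.g. mismatching interfaces) *)
Definition icomp (Sigma : finType) (k : nat) (a b : iipk Sigma k) : iipk Sigma k :=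
  match excluded_middle_informative
          (exists p, valid k p /\ pom_iso (glue (rep a) (rep b)) = pom_iso p) with
  | left h => exist _ (pom_iso (glue (rep a) (rep b))) h
  | right _ => a
  end.

Definition is_id (Sigma : finType) (k : nat) (a : iipk Sigma k) (U : seq Sigma) : Prop :=
  proj1_sig a = pom_iso (idpom U).

Record is_module (Sigma : finType) (k : nat) (M : Type)
    (msrc mtgt : M -> seq Sigma) (act : M -> iipk Sigma k -> M) : Prop := {
  mod_srctgt : forall m a, mtgt m = isrc a ->
      msrc (act m a) = msrc m /\ mtgt (act m a) = itgt a;
  mod_id : forall m a, is_id a (mtgt m) -> act m a = m;
  mod_assoc : forall m a b, mtgt m = isrc a -> itgt a = isrc b ->
      act (act m a) b = act m (icomp a b) }.

Definition is_hom (Sigma : finType) (k : nat) (M N : Type)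
    (msrc mtgt : M -> seq Sigma) (mact : M -> iipk Sigma k -> M)
    (nsrc ntgt : N -> seq Sigma) (nact : N -> iipk Sigma k -> N)
    (f : M -> N) : Prop :=
  (forall m, nsrc (f m) = msrc m /\ ntgt (f m) = mtgt m) /\
  (forall m a, mtgt m = isrc a -> f (mact m a) = nact (f m) a).

(* P\L together with its interfaces (S_P, T_P) *)
Definition quo (Sigma : finType) (k : nat) (L : iipk Sigma k -> Prop) (P : iipk Sigma k)
  : seq Sigma * seq Sigma * (iipk Sigma k -> Prop) :=
  (isrc P, itgt P, fun Q => isrc Q = itgt P /\ L (icomp P Q)).

Definition suff (Sigma : finType) (k : nat) (L : iipk Sigma k -> Prop) : Type :=
  { t | exists P, t = quo L P }.

Definition phi (Sigma : finType) (k : nat) (L : iipk Sigma k -> Prop) (P : iipk Sigma k)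
  : suff L := exist _ (quo L P) (ex_intro _ P erefl).

Definition srep (Sigma : finType) (k : nat) (L : iipk Sigma k -> Prop) (t : suff L)
  : iipk Sigma k :=
  proj1_sig (constructive_indefinite_description _ (proj2_sig t)).

Definition ssrc (Sigma : finType) (k : nat) (L : iipk Sigma k -> Prop) (t : suff L)
  : seq Sigma := (proj1_sig t).1.1.
Definition stgt (Sigma : finType) (k : nat) (L : iipk Sigma k -> Prop) (t : suff L)
  : seq Sigma := (proj1_sig t).1.2.

(* (P\L) . Q = (P*Q)\L, computed on a chosen representative P *)
Definition sact (Sigma : finType) (k : nat) (L : iipk Sigma k -> Prop) (t : suff L)
  (Q : iipk Sigma k) : suff L := phi L (icomp (srep t) Q).

Definition Jset (Sigma : finType) (k : nat) (L : iipk Sigma k -> Prop) (t : suff L) : Prop :=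
  exists P, L P /\ t = phi L P.

(* Main.v *)
Require Import Defs.
From mathcomp Require Import all_boot zify.
From Stdlib Require Import ClassicalEpsilon FunctionalExtensionality PropExtensionality ProofIrrelevance.
Set Implicit Arguments.
Unset Strict Implicit.
Unset Printing Implicit Defensive.

Section General.
Variable Sigma : finType.
Implicit Types P Q : pom Sigma.

Definition TO P (A : {set pev P}) : Prop :=
 (forall x y, x \in A -> y \in A -> x != y -> pevo P x y || pevo P y x) /\
 (forall x, x \in A -> ~~ pevo P x x) /\
 (forall x y z, x \in A -> y \in A -> z \in A -> pevo P x y -> pevo P y z -> pevo P x z).

Lemma rank_lt P (A : {set pev P}) x y : TO A -> x \in A -> y \in A ->
  pevo P x y -> rank A x < rank A y.
Proof.
move=> [tot [irr tr]] xA yA xy; apply: proper_card; apply/properP; split.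
  apply/subsetP=> z; rewrite !inE => /andP[zA zx]; rewrite zA /=.
  exact: (tr z x y).
exists x; first by rewrite inE xA.
by rewrite inE xA /= (negbTE (irr x xA)).
Qed.

Lemma rank_ltE P (A : {set pev P}) x y : TO A -> x \in A -> y \in A ->
  (rank A x < rank A y) = pevo P x y.
Proof.
move=> hT xA yA; apply/idP/idP; last exact: rank_lt.
move=> lt; case: (eqVneq x y) => [exy|nxy]; first by rewrite exy ltnn in lt.
have := (proj1 hT) x y xA yA nxy; case/orP=> // yx.
by have := rank_lt hT yA xA yx; rewrite ltnNge (ltnW lt).
Qed.

Lemma rank_inj P (A : {set pev P}) : TO A -> {in A &, injective (rank A)}.
Proof.
move=> hT x y xA yA e; apply/eqP; apply/negP=> /negP nxy.
case/orP: ((proj1 hT) x y xA yA nxy) => h.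
  by have := rank_lt hT xA yA h; rewrite e ltnn.
by have := rank_lt hT yA xA h; rewrite e ltnn.
Qed.

Lemma rank_bound P (A : {set pev P}) x : TO A -> x \in A -> rank A x < #|A|.
Proof.
move=> [_ [irr _]] xA; apply: proper_card; apply/properP; split.
  by apply/subsetP=> z; rewrite inE => /andP[].
by exists x => //; rewrite inE xA (negbTE (irr x xA)).
Qed.

Definition rsort P (A : {set pev P}) :=
  sort (fun x y => rank A x <= rank A y) (enum A).

Lemma map_rank_sort P (A : {set pev P}) : TO A ->
  map (rank A) (rsort A) = iota 0 #|A|.
Proof.
move=> hT.
have memA : forall z, z \in rsort A -> z \in A.
  by move=> z; rewrite mem_sort mem_enum.
have un : uniq (map (rank A) (rsort A)).
  rewrite map_inj_in_uniq ?sort_uniq ?enum_uniq //.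
  by move=> x y /memA xA /memA yA; apply: rank_inj.
have sz : size (map (rank A) (rsort A)) = #|A|.
  by rewrite size_map size_sort cardE.
have sub : {subset map (rank A) (rsort A) <= iota 0 #|A|}.
  move=> i /mapP[x /memA xA ->]; rewrite mem_iota add0n /=.
  exact: rank_bound.
have [_ eqm] : ((size (map (rank A) (rsort A)) = size (iota 0 #|A|)) *
   (map (rank A) (rsort A) =i iota 0 #|A|))%type.
  by apply: uniq_min_size un sub _; rewrite size_iota sz.
apply: (sorted_eq leq_trans anti_leq).
- rewrite sorted_map; apply: sort_sorted => x y; exact: leq_total.
- exact: iota_sorted.
- apply: uniq_perm => //; exact: iota_uniq.
Qed.

Lemma rank_surj P (A : {set pev P}) i : TO A -> i < #|A| ->
  exists2 x, x \in A & rank A x = i.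
Proof.
move=> hT lti.
have : i \in map (rank A) (rsort A).
  by rewrite map_rank_sort // mem_iota.
case/mapP=> x; rewrite mem_sort mem_enum => xA ->; by exists x.
Qed.

Lemma word_size P (A : {set pev P}) : size (word A) = #|A|.
Proof. by rewrite /word size_map size_sort cardE. Qed.

Lemma word_nth P (A : {set pev P}) x d : TO A -> x \in A ->
  nth d (word A) (rank A x) = plab P x.
Proof.
move=> hT xA.
have xs : x \in rsort A by rewrite mem_sort mem_enum.
have e := map_rank_sort hT.
set i := index x (rsort A).
have lti : i < size (rsort A) by rewrite index_mem.
have ri : rank A x = i.
  have := congr1 (fun s => nth 0 s i) e.
  rewrite (nth_map x) // nth_index // nth_iota ?add0n //.
  by move: lti; rewrite size_sort cardE.
rewrite ri /word -/(rsort A) (nth_map x) // nth_index //.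
Qed.

Lemma TO_sub P (A B : {set pev P}) : A \subset B -> TO B -> TO A.
Proof.
move=> /subsetP sAB [h1 [h2 h3]]; split; [|split].
- by move=> x y /sAB xA /sAB yA; apply: h1.
- by move=> x /sAB; apply: h2.
- by move=> x y z /sAB ? /sAB ? /sAB ?; apply: h3.
Qed.

Section Rel.
Variables (P Q : pom Sigma) (A : {set pev P}) (B : {set pev Q}).
Variable R : pev P -> pev Q -> bool.
Hypothesis TA : TO A.
Hypothesis TB : TO B.
Hypothesis exl : forall x, x \in A -> exists2 y, y \in B & R x y.
Hypothesis exr : forall y, y \in B -> exists2 x, x \in A & R x y.
Hypothesis evo : forall x y x' y', x \in A -> y \in B -> x' \in A -> y' \in B ->
  R x y -> R x' y' -> pevo Q y y' = pevo P x x'.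

Lemma rel_funl x y y' : x \in A -> y \in B -> y' \in B -> R x y -> R x y' -> y = y'.
Proof.
move=> xA yB y'B r1 r2; apply/eqP; apply/negP=> /negP ne.
have := (proj1 TB) y y' yB y'B ne.
rewrite (evo xA yB xA y'B r1 r2) (evo xA y'B xA yB r2 r1).
by rewrite orbb (negbTE ((proj1 (proj2 TA)) x xA)).
Qed.

Lemma rel_funr x x' y : x \in A -> x' \in A -> y \in B -> R x y -> R x' y -> x = x'.
Proof.
move=> xA x'A yB r1 r2; apply/eqP; apply/negP=> /negP ne.
have := (proj1 TA) x x' xA x'A ne.
rewrite -(evo xA yB x'A yB r1 r2) -(evo x'A yB xA yB r2 r1).
by rewrite orbb (negbTE ((proj1 (proj2 TB)) y yB)).
Qed.

Lemma rel_card_rank x y : x \in A -> y \in B -> R x y ->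
  rank A x = rank B y /\ #|A| = #|B|.
Proof.
move=> xA yB rxy.
pose f z := odflt y [pick w in B | R z w].
have fP : forall z, z \in A -> f z \in B /\ R z (f z).
  move=> z zA; rewrite /f; case: pickP => [w /andP[]|] //=.
  move=> H; case: (exl zA) => w wB rw; by have := H w; rewrite wB rw.
have finj : {in A &, injective f}.
  move=> z z' zA z'A e; have [f1 r1] := fP z zA; have [f2 r2] := fP z' z'A.
  by apply: (rel_funr zA z'A f1 r1); rewrite e.
have fimg : forall (C : {set pev P}) (D : {set pev Q}), C \subset A ->
   (forall z w, z \in A -> w \in B -> R z w -> (z \in C) = (w \in D)) ->
   D \subset B -> f @: C = D.
  move=> C D /subsetP CA hCD /subsetP DB; apply/setP=> w; apply/imsetP/idP.
    case=> z zC ->; have [f1 r1] := fP z (CA _ zC).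
    by rewrite -(hCD z (f z) (CA _ zC) f1 r1).
  move=> wD; have wB := DB _ wD; case: (exr wB) => z zA rzw.
  have [f1 r1] := fP z zA; have e := rel_funl zA f1 wB r1 rzw.
  by exists z; rewrite // (hCD z w zA wB rzw).
split.
  rewrite /rank -(fimg [set z in A | pevo P z x] [set w in B | pevo Q w y]).
  - rewrite card_in_imset //; move=> z z' /[!inE] /andP[zA _] /andP[z'A _].
    exact: finj.
  - by apply/subsetP=> z; rewrite inE => /andP[].
  - move=> z w zA wB rzw; rewrite !inE zA wB /=.
    by rewrite (evo zA wB xA yB rzw rxy).
  - by apply/subsetP=> z; rewrite inE => /andP[].
rewrite -(fimg A B) ?subxx //; first by rewrite card_in_imset.
by move=> z w -> ->.
Qed.

End Rel.

End General.
Set Implicit Arguments.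
Unset Strict Implicit.
Unset Printing Implicit Defensive.

Section General2.
Variable Sigma : finType.
Implicit Types P Q : pom Sigma.

Lemma word_rel P Q (A : {set pev P}) (B : {set pev Q}) (R : pev P -> pev Q -> bool) :
  TO A -> TO B ->
  (forall x, x \in A -> exists2 y, y \in B & R x y) ->
  (forall y, y \in B -> exists2 x, x \in A & R x y) ->
  (forall x y x' y', x \in A -> y \in B -> x' \in A -> y' \in B ->
     R x y -> R x' y' -> pevo Q y y' = pevo P x x') ->
  (forall x y, x \in A -> y \in B -> R x y -> plab Q y = plab P x) ->
  word A = word B.
Proof.
move=> TA TB exl exr evo lab.
case: (set_0Vmem A) => [A0|[x0 x0A]].
  have B0 : B = set0.
    apply/setP=> y; rewrite inE; apply/negP=> yB.
    by case: (exr y yB) => x; rewrite A0 inE.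
  have : size (word A) = 0 by rewrite word_size A0 cards0.
  have : size (word B) = 0 by rewrite word_size B0 cards0.
  by case: (word A) => //; case: (word B).
case: (exl x0 x0A) => y0 y0B r0.
have [_ cAB] := rel_card_rank TA TB exl exr evo x0A y0B r0.
apply: (@eq_from_nth _ (plab P x0)); first by rewrite !word_size.
move=> i; rewrite word_size => lti.
case: (rank_surj TA lti) => x xA <-.
case: (exl x xA) => y yB rxy.
have [e _] := rel_card_rank TA TB exl exr evo xA yB rxy.
rewrite word_nth // e word_nth //; exact: (esym (lab x y xA yB rxy)).
Qed.

Lemma valid_irr k P : valid k P -> irreflexive (plt P).
Proof. by case. Qed.
Lemma valid_tr k P : valid k P -> transitive (plt P).
Proof. by case=> _ []. Qed.
Lemma valid_int k P : valid k P ->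
  forall w x y z, plt P w y -> plt P x z -> plt P w z || plt P x y.
Proof. by case=> _ [] _ []. Qed.
Lemma valid_evo k P : valid k P ->
  forall x y, pevo P x y -> [&& x != y, ~~ plt P x y & ~~ plt P y x].
Proof. by case=> _ [] _ [] _ []. Qed.
Lemma valid_tot k P : valid k P ->
  forall x y, x != y -> ~~ plt P x y -> ~~ plt P y x -> pevo P x y || pevo P y x.
Proof. by case=> _ [] _ [] _ [] _ []. Qed.
Lemma valid_acyc k P : valid k P -> forall x y, pevo P x y -> ~~ connect (pevo P) y x.
Proof. by case=> _ [] _ [] _ [] _ [] _ []. Qed.
Lemma valid_S k P : valid k P -> forall x, x \in pS P -> forall y, ~~ plt P y x.
Proof. by case=> _ [] _ [] _ [] _ [] _ [] _ []. Qed.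
Lemma valid_T k P : valid k P -> forall x, x \in pT P -> forall y, ~~ plt P x y.
Proof. by case=> _ [] _ [] _ [] _ [] _ [] _ [] _ []. Qed.
Lemma valid_w k P : valid k P -> forall A : {set pev P}, antichain A -> #|A| <= k.
Proof. by case=> _ [] _ [] _ [] _ [] _ [] _ [] _ []. Qed.

Lemma valid_TO k P (A : {set pev P}) : valid k P ->
  (forall x y, x \in A -> y \in A -> ~~ plt P x y) -> TO A.
Proof.
move=> v nlt; split; [|split].
- move=> x y xA yA ne; apply: (valid_tot v) => //; exact: nlt.
- by move=> x _; apply/negP=> /(valid_evo v); rewrite eqxx.
- move=> x y z xA yA zA xy yz.
  case: (eqVneq x z) => [exz|nxz].
    by subst z; have := valid_acyc v xy; rewrite connect1.
  case/orP: (valid_tot v nxz (nlt x z xA zA) (nlt z x zA xA)) => // zx.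
  have := valid_acyc v zx; rewrite (connect_trans (connect1 xy) (connect1 yz)) //.
Qed.

Lemma valid_TOS k P : valid k P -> TO (pS P).
Proof. move=> v; apply: (valid_TO v) => x y _ yS; exact: (valid_S v). Qed.
Lemma valid_TOT k P : valid k P -> TO (pT P).
Proof. move=> v; apply: (valid_TO v) => x y xT _; exact: (valid_T v xT). Qed.

Lemma connect_mono (T : finType) (e : rel T) (h : T -> nat) :
  (forall x y, e x y -> h x <= h y) -> forall x y, connect e x y -> h x <= h y.
Proof.
move=> mono x y /connectP[p]; elim: p x => [|z p IH] x /=; first by move=> _ ->.
by case/andP=> exz pz ey; apply: leq_trans (mono _ _ exz) (IH _ pz ey).
Qed.

Lemma height_acyc (T : finType) (e : rel T) (h : T -> nat) :
  (forall x y, e x y -> h x < h y) -> forall x y, e x y -> ~~ connect e y x.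
Proof.
move=> mono x y exy; apply/negP=> /(connect_mono (fun a b H => ltnW (mono a b H))).
by rewrite leqNgt mono.
Qed.

Lemma acyc_count (T : finType) (e : rel T) (A : {set T}) x y :
  (forall x y, e x y -> ~~ connect e y x) -> e x y ->
  #|[set t in A | connect e t x]| <= #|[set t in A | connect e t y]| /\
  (y \in A -> #|[set t in A | connect e t x]| < #|[set t in A | connect e t y]|).
Proof.
move=> ac exy.
have sub : [set t in A | connect e t x] \subset [set t in A | connect e t y].
  apply/subsetP=> t; rewrite !inE => /andP[-> ctx] /=.
  exact: connect_trans ctx (connect1 exy).
split; first exact: subset_leq_card.
move=> yA; apply: proper_card; apply/properP; split=> //.
exists y; first by rewrite inE yA connect0.
by rewrite inE yA (negbTE (ac _ _ exy)).
Qed.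

Lemma count_rank k P (A : {set pev P}) x : valid k P -> TO A -> x \in A ->
  #|[set t in A | connect (pevo P) t x]| = (rank A x).+1.
Proof.
move=> v TA xA.
have -> : [set t in A | connect (pevo P) t x] = x |: [set t in A | pevo P t x].
  apply/setP=> t; rewrite !inE; case: (eqVneq t x) => [->|ntx] /=.
    by rewrite xA connect0.
  apply/andP/andP=> [[tA ctx]|[tA ptx]]; split=> //; last exact: connect1.
  case/orP: ((proj1 TA) t x tA xA ntx) => // pxt.
  by have := valid_acyc v pxt; rewrite ctx.
rewrite cardsU1 inE (negbTE ((proj1 (proj2 TA)) x xA)) andbF /=.
by rewrite add1n.
Qed.

End General2.
Set Implicit Arguments.
Unset Strict Implicit.
Unset Printing Implicit Defensive.

Section Glue.
Variable Sigma : finType.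
Variable k : nat.
Variables p q : pom Sigma.
Hypothesis vp : valid k p.
Hypothesis vq : valid k q.
Hypothesis cpq : word (pT p) = word (pS q).

Local Notation cr := (@corr Sigma p q).
Let TT := valid_TOT vp.
Let TS := valid_TOS vq.

Lemma corrT x s : cr x s -> x \in pT p.
Proof. by case/and3P. Qed.
Lemma corrS x s : cr x s -> s \in pS q.
Proof. by case/and3P. Qed.
Lemma corr_rank x s : cr x s -> rank (pT p) x = rank (pS q) s.
Proof. by case/and3P=> _ _ /eqP. Qed.

Lemma card_TS : #|pT p| = #|pS q|.
Proof. by rewrite -!word_size cpq. Qed.

Lemma corr_exl x : x \in pT p -> exists s, cr x s.
Proof.
move=> xT; have := rank_bound TT xT; rewrite card_TS => lt.
case: (rank_surj TS lt) => s sS e; exists s; by rewrite /corr xT sS e eqxx.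
Qed.

Lemma corr_exr s : s \in pS q -> exists x, cr x s.
Proof.
move=> sS; have := rank_bound TS sS; rewrite -card_TS => lt.
case: (rank_surj TT lt) => x xT e; exists x; by rewrite /corr xT sS e eqxx.
Qed.

Lemma corr_funl x s s' : cr x s -> cr x s' -> s = s'.
Proof.
move=> c1 c2; apply: (rank_inj TS (corrS c1) (corrS c2)).
by rewrite -(corr_rank c1) -(corr_rank c2).
Qed.

Lemma corr_funr x x' s : cr x s -> cr x' s -> x = x'.
Proof.
move=> c1 c2; apply: (rank_inj TT (corrT c1) (corrT c2)).
by rewrite (corr_rank c1) (corr_rank c2).
Qed.

Lemma corr_evo x s x' s' : cr x s -> cr x' s' -> pevo q s s' = pevo p x x'.
Proof.
move=> c1 c2.
rewrite -(rank_ltE TS (corrS c1) (corrS c2)) -(rank_ltE TT (corrT c1) (corrT c2)).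
by rewrite (corr_rank c1) (corr_rank c2).
Qed.

Lemma corr_lab x s : cr x s -> plab q s = plab p x.
Proof.
move=> c; have d := plab p x.
rewrite -(word_nth d TS (corrS c)) -(word_nth d TT (corrT c)) -cpq.
by rewrite (corr_rank c).
Qed.

Local Notation G := (glue p q).

Lemma gltE_ll x x' : plt G (inl x) (inl x') = plt p x x'.
Proof.
rewrite /= /glt; case: (plt p x x') => //=; apply/existsP=> [[s /existsP[s']]].
by case/and3P=> _ c2 lt; have := valid_S vq (corrS c2) s; rewrite lt.
Qed.
Lemma gltE_rl y x : plt G (inr y) (inl x) = false.
Proof.
rewrite /= /glt; apply/existsP=> [[s /andP[c lt]]].
by have := valid_S vq (corrS c) (val y); rewrite lt.
Qed.
Lemma gltE_rr y y' : plt G (inr y) (inr y') = plt q (val y) (val y').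
Proof. by []. Qed.
Lemma glt_lrN x y : x \notin pT p -> plt G (inl x) (inr y).
Proof. by rewrite /= /glt => ->. Qed.
Lemma glt_lrT x s : cr x s -> forall y, plt G (inl x) (inr y) = plt q s (val y).
Proof.
move=> c y; rewrite /= /glt (corrT c) /=; apply/existsP/idP=> [[s' /andP[c' lt]]|lt].
  by rewrite (corr_funl c c').
by exists s; rewrite c.
Qed.

Lemma gevoE_ll x x' : pevo G (inl x) (inl x') = pevo p x x'.
Proof.
rewrite /= /gevo; case e: (pevo p x x') => //=; apply/existsP=> [[s /existsP[s']]].
by case/and3P=> c1 c2; rewrite (corr_evo c1 c2) e.
Qed.
Lemma gevoE_rr y y' : pevo G (inr y) (inr y') = pevo q (val y) (val y').
Proof. by []. Qed.
Lemma gevo_lrN x y : x \notin pT p -> pevo G (inl x) (inr y) = false.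
Proof.
move=> nT; rewrite /= /gevo; apply/existsP=> [[s /andP[c _]]].
by rewrite (corrT c) in nT.
Qed.
Lemma gevo_rlN x y : x \notin pT p -> pevo G (inr y) (inl x) = false.
Proof.
move=> nT; rewrite /= /gevo; apply/existsP=> [[s /andP[c _]]].
by rewrite (corrT c) in nT.
Qed.
Lemma gevo_lrT x s : cr x s -> forall y, pevo G (inl x) (inr y) = pevo q s (val y).
Proof.
move=> c y; rewrite /= /gevo; apply/existsP/idP=> [[s' /andP[c' lt]]|lt].
  by rewrite (corr_funl c c').
by exists s; rewrite c.
Qed.
Lemma gevo_rlT x s : cr x s -> forall y, pevo G (inr y) (inl x) = pevo q (val y) s.
Proof.
move=> c y; rewrite /= /gevo; apply/existsP/idP=> [[s' /andP[c' lt]]|lt].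
  by rewrite (corr_funl c c').
by exists s; rewrite c.
Qed.

Lemma gS_l x : (inl x \in pS G) = (x \in pS p).
Proof. by rewrite /= /gS inE. Qed.
Lemma gS_r y : (inr y \in pS G) = false.
Proof. by rewrite /= /gS inE. Qed.
Lemma gT_r y : (inr y \in pT G) = (val y \in pT q).
Proof. by rewrite /= /gT inE. Qed.
Lemma gT_lN x : x \notin pT p -> (inl x \in pT G) = false.
Proof.
move=> nT; rewrite /= /gT inE; apply/existsP=> [[s /andP[c _]]].
by rewrite (corrT c) in nT.
Qed.
Lemma gT_lT x s : cr x s -> (inl x \in pT G) = (s \in pT q).
Proof.
move=> c; rewrite /= /gT inE; apply/existsP/idP=> [[s' /andP[c' lt]]|lt].
  by rewrite (corr_funl c c').
by exists s; rewrite c.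
Qed.
Lemma glab_l x : plab G (inl x) = plab p x. Proof. by []. Qed.
Lemma glab_r y : plab G (inr y) = plab q (val y). Proof. by []. Qed.

End Glue.
Set Implicit Arguments.
Unset Strict Implicit.
Unset Printing Implicit Defensive.

Section GlueValid.
Variable Sigma : finType.
Variable k : nat.
Variables p q : pom Sigma.
Hypothesis vp : valid k p.
Hypothesis vq : valid k q.
Hypothesis cpq : word (pT p) = word (pS q).
Local Notation G := (glue p q).
Local Notation cr := (@corr Sigma p q).
Let funr := @corr_funr Sigma k p q vp.
Let TT := valid_TOT vp.
Let TS := valid_TOS vq.
Let ll := @gltE_ll Sigma k p q vq.
Let rl := @gltE_rl Sigma k p q vq.
Let rr := @gltE_rr Sigma p q.
Let lrT := @glt_lrT Sigma k p q vq.
Let lrN := @glt_lrN Sigma p q.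
Let ell := @gevoE_ll Sigma k p q vp vq.
Let err := @gevoE_rr Sigma p q.
Let elrT := @gevo_lrT Sigma k p q vq.
Let erlT := @gevo_rlT Sigma k p q vq.
Let elrN := @gevo_lrN Sigma p q.
Let erlN := @gevo_rlN Sigma p q.
Let exl := @corr_exl Sigma k p q vp vq cpq.
Let funl := @corr_funl Sigma k p q vq.
Let cevo := @corr_evo Sigma k p q vp vq.
Let gTT := @gT_lT Sigma k p q vq.
Let exr := @corr_exr Sigma k p q vp vq cpq.

Lemma nT_of_lt x y : plt p x y -> x \notin pT p.
Proof. by move=> lt; apply/negP=> xT; have := valid_T vp xT y; rewrite lt. Qed.

Lemma glue_irr : irreflexive (plt G).
Proof.
move=> [x|y]; first by rewrite ll (valid_irr vp).
by rewrite rr (valid_irr vq).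
Qed.

Lemma glue_tr : transitive (plt G).
Proof.
move=> [y|y] [x|x] [z|z]; rewrite ?ll ?rl ?rr //.
- move=> h1 h2; exact: (valid_tr vp h1 h2).
- by move=> /nT_of_lt xT _; apply: lrN.
- case: (boolP (x \in pT p)) => [/exl [s c]|nT]; last by move=> _ _; apply: lrN.
  rewrite !(lrT c) => h1 h2; exact: (valid_tr vq h1 h2).
- move=> h1 h2; exact: (valid_tr vq h1 h2).
Qed.

Lemma glue_int w x y z : plt G w y -> plt G x z -> plt G w z || plt G x y.
Proof.
case: w => [w|w]; case: x => [x|x]; case: y => [y|y]; case: z => [z|z];
  rewrite ?ll ?rl ?rr ?orbF ?orFb //.
- exact: (valid_int vp).
- by move=> /nT_of_lt wT _; apply/orP; left; apply: lrN.
- by move=> _ /nT_of_lt xT; apply/orP; right; apply: lrN.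
- case: (boolP (w \in pT p)) => [/exl [sw cw]|nw]; last by move=> _ _; apply/orP; left; apply: lrN.
  case: (boolP (x \in pT p)) => [/exl [sx cx]|nx]; last by move=> _ _; apply/orP; right; apply: lrN.
  rewrite !(lrT cw) !(lrT cx); exact: (valid_int vq).
- by move=> /nT_of_lt wT _; apply: lrN.
- case: (boolP (w \in pT p)) => [/exl [sw cw]|nw]; last by move=> _ _; apply/orP; left; apply: lrN.
  rewrite !(lrT cw); exact: (valid_int vq).
- by move=> _ /nT_of_lt xT; apply: lrN.
- case: (boolP (x \in pT p)) => [/exl [sx cx]|nx]; last by move=> _ _; apply/orP; right; apply: lrN.
  rewrite !(lrT cx); exact: (valid_int vq).
- exact: (valid_int vq).
Qed.

Lemma glue_evo1 u v : pevo G u v -> [&& u != v, ~~ plt G u v & ~~ plt G v u].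
Proof.
case: u => [x|y]; case: v => [x'|y'].
- rewrite ell !ll => /(valid_evo vp) /and3P[ne h1 h2]; rewrite h1 h2 !andbT.
  by apply/eqP=> [[e]]; rewrite e eqxx in ne.
- case: (boolP (x \in pT p)) => [/exl [s c]|nx]; last by rewrite elrN.
  by rewrite (elrT c) (lrT c) rl => /(valid_evo vq) /and3P[_ -> _].
- case: (boolP (x' \in pT p)) => [/exl [s c]|nx]; last by rewrite erlN.
  by rewrite (erlT c) (lrT c) rl => /(valid_evo vq) /and3P[_ _ ->].
- rewrite err !rr => /(valid_evo vq) /and3P[ne h1 h2]; rewrite h1 h2 !andbT.
  by apply/eqP=> [[e]]; rewrite e eqxx in ne.
Qed.

Lemma glue_tot u v : u != v -> ~~ plt G u v -> ~~ plt G v u -> pevo G u v || pevo G v u.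
Proof.
case: u => [x|y]; case: v => [x'|y'].
- rewrite ell ell !ll => ne; apply: (valid_tot vp).
  by apply/eqP=> e; rewrite e eqxx in ne.
- case: (boolP (x \in pT p)) => [/exl [s c]|nx]; last by rewrite lrN.
  rewrite (elrT c) (erlT c) (lrT c) => _ h _; apply: (valid_tot vq) => //.
    by apply/eqP=> e; have := valP y'; rewrite -e (corrS c).
  exact: (valid_S vq (corrS c)).
- case: (boolP (x' \in pT p)) => [/exl [s c]|nx]; last by rewrite lrN.
  rewrite (elrT c) (erlT c) (lrT c) => _ _ h; rewrite orbC; apply: (valid_tot vq) => //.
    by apply/eqP=> e; have := valP y; rewrite -e (corrS c).
  exact: (valid_S vq (corrS c)).
- rewrite err err !rr => ne; apply: (valid_tot vq).
  by apply/eqP=> e; rewrite (val_inj e) eqxx in ne.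
Qed.

Definition levG (u : pev G) : nat :=
  match u with
  | inl x => #|[set t in pT p | connect (pevo p) t x]|
  | inr y => #|[set s in pS q | connect (pevo q) s (val y)]|
  end.
Definition hP (x : pev p) := #|[set t in [set: pev p] | connect (pevo p) t x]|.
Definition hQ (y : pev q) := #|[set t in [set: pev q] | connect (pevo q) t y]|.
Definition h2G (u : pev G) : nat :=
  match u with
  | inl x => if x \in pT p then 0 else (hP x).+1
  | inr y => (hQ (val y)).+1
  end.
Definition NG := #|[set: pev p]| + #|[set: pev q]| + 2.
Definition HG (u : pev G) := levG u * NG + h2G u.

Lemma lexH a a' b b' N : a <= a' -> (a < a') || (b < b') -> b < N -> a * N + b < a' * N + b'.
Proof. move=> h1 /orP[h2|h2] h3; nia. Qed.

Lemma h2G_lt u : h2G u < NG.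
Proof.
rewrite /NG; case: u => [x|y] /=.
  case: (x \in pT p); first lia.
  have := subset_leq_card (subsetT [set t in [set: pev p] | connect (pevo p) t x]); rewrite /hP; lia.
rewrite /hQ; have := subset_leq_card (subsetT [set t in [set: pev q] | connect (pevo q) t (sval y)]); lia.
Qed.

Lemma lev_corr x s : cr x s -> levG (inl x) = #|[set s' in pS q | connect (pevo q) s' s]|.
Proof.
move=> c /=; rewrite (count_rank vp TT (corrT c)) (count_rank vq TS (corrS c)).
by rewrite (corr_rank c).
Qed.

Lemma HG_mono u v : pevo G u v -> HG u < HG v.
Proof.
have acp := valid_acyc vp; have acq := valid_acyc vq.
rewrite /HG; case: u => [x|y]; case: v => [x'|y'].
- rewrite ell => e; apply: lexH; last exact: h2G_lt.
  + exact: (proj1 (acyc_count (pT p) acp e)).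
  + case: (boolP (x' \in pT p)) => [x'T|nx'].
      by rewrite /= (proj2 (acyc_count (pT p) acp e) x'T).
    rewrite /= (negbTE nx'); case: (x \in pT p); first by rewrite orbT.
    by rewrite ltnS /hP (proj2 (acyc_count [set: pev p] acp e) (in_setT _)) orbT.
- case: (boolP (x \in pT p)) => [/exl [s c]|nx]; last by rewrite elrN.
  rewrite (elrT c) => e; apply: lexH; last exact: h2G_lt.
  + rewrite (lev_corr c); exact: (proj1 (acyc_count (pS q) acq e)).
  + by rewrite /= (corrT c) orbT.
- case: (boolP (x' \in pT p)) => [/exl [s c]|nx]; last by rewrite erlN.
  rewrite (erlT c) => e; apply: lexH; last exact: h2G_lt.
  + rewrite (lev_corr c); exact: (proj1 (acyc_count (pS q) acq e)).
  + by rewrite (lev_corr c) /= (proj2 (acyc_count (pS q) acq e) (corrS c)).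
- rewrite err => e; apply: lexH; last exact: h2G_lt.
  + exact: (proj1 (acyc_count (pS q) acq e)).
  + by rewrite /= ltnS /hQ (proj2 (acyc_count [set: pev q] acq e) (in_setT _)) orbT.
Qed.

Lemma glue_acyc u v : pevo G u v -> ~~ connect (pevo G) v u.
Proof. exact: (height_acyc HG_mono). Qed.

Lemma glue_S u : u \in pS G -> forall v, ~~ plt G v u.
Proof.
case: u => [x|y]; last by rewrite gS_r.
rewrite gS_l => xS [x'|y]; first by rewrite ll (valid_S vp xS).
by rewrite rl.
Qed.

Lemma glue_T u : u \in pT G -> forall v, ~~ plt G u v.
Proof.
case: u => [x|y].
  case: (boolP (x \in pT p)) => [xT|nx]; last by rewrite gT_lN.
  case: (exl xT) => s c; rewrite (gTT c) => sT [x'|y].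
    by rewrite ll (valid_T vp xT).
  by rewrite (lrT c) (valid_T vq sT).
rewrite gT_r => yT [x|y']; first by rewrite rl.
by rewrite rr (valid_T vq yT).
Qed.

Lemma antiP (P : pom Sigma) (A : {set pev P}) :
  antichain A <-> (forall x y, x \in A -> y \in A -> ~~ plt P x y).
Proof.
split.
  by move=> /forallP H x y xA yA; move: (H x); rewrite xA /= => /forallP/(_ y); rewrite yA.
move=> H; apply/forallP=> x; apply/implyP=> xA; apply/forallP=> y; apply/implyP=> yA.
exact: H.
Qed.

Lemma glue_w (A : {set pev G}) : antichain A -> #|A| <= k.
Proof.
move/antiP=> anti.
case: (boolP [exists x, (inl x \in A) && (x \notin pT p)]).
  case/existsP=> x0 /andP[x0A nx0].
  have allinl : forall u, u \in A -> exists x, u = inl x.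
    move=> [x|y] uA; first by exists x.
    by have := anti _ _ x0A uA; rewrite lrN.
  pose f (u : pev G) := match u with inl x => x | inr _ => x0 end.
  have finj : {in A &, injective f}.
    move=> u v /allinl [x ->] /allinl [x' ->] /= ->; by [].
  rewrite -(card_in_imset finj); apply: (valid_w vp); apply/antiP.
  move=> b b' /imsetP[u uA ->] /imsetP[v vA ->].
  case: (allinl u uA) => x ex; case: (allinl v vA) => x' ex'; subst u v => /=.
  by rewrite -ll; apply: anti.
move=> noP.
have inlT : forall x, inl x \in A -> x \in pT p.
  move=> x xA; apply/negP=> /negP nx; move/negP: noP; apply; apply/existsP; exists x.
  by rewrite xA nx.
case: (set_0Vmem A) => [->|[u0 u0A]]; first by rewrite cards0.
have [d _] : exists d : pev q, true.
  case: u0 u0A => [x|y] uA; last by exists (val y).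
  by case: (exl (inlT x uA)) => s _; exists s.
pose g (u : pev G) := match u with inl x => odflt d [pick s | cr x s] | inr y => val y end.
have gc : forall x, inl x \in A -> cr x (g (inl x)).
  move=> x xA /=; case: pickP => [s //|H].
  by case: (exl (inlT x xA)) => s c; have := H s; rewrite c.
have ginj : {in A &, injective g}.
  move=> [x|y] [x'|y'] uA vA.
  - move=> e; have c1 := gc x uA; have c2 := gc x' vA; rewrite e in c1.
    by rewrite (funr c1 c2).
  - move=> e; have h := corrS (gc x uA); rewrite e /= in h.
    by have := valP y'; rewrite /= h.
  - move=> e; have h := corrS (gc x' vA); rewrite -e /= in h.
    by have := valP y; rewrite /= h.
  - by move=> /= e; rewrite (val_inj e).
rewrite -(card_in_imset ginj); apply: (valid_w vq); apply/antiP.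
move=> b b' /imsetP[u uA ->] /imsetP[v vA ->].
case: u uA => [x|y] uA; case: v vA => [x'|y'] vA.
- exact: (valid_S vq (corrS (gc x' vA))).
- by have := anti _ _ uA vA; rewrite (lrT (gc x uA)).
- exact: (valid_S vq (corrS (gc x' vA))).
- by have := anti _ _ uA vA; rewrite rr.
Qed.

Lemma glue_valid : valid k G.
Proof.
split; first exact: glue_irr.
split; first exact: glue_tr.
split; first exact: glue_int.
split; first exact: glue_evo1.
split; first exact: glue_tot.
split; first exact: glue_acyc.
split; first exact: glue_S.
split; first exact: glue_T.
exact: glue_w.
Qed.

Let vG := glue_valid.

Lemma word_gS : word (pS G) = word (pS p).
Proof.
apply: (@word_rel _ G p (pS G) (pS p) (fun u x => u == inl x)).
- exact: valid_TOS vG.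
- exact: valid_TOS vp.
- move=> [x|y]; last by rewrite gS_r.
  by rewrite gS_l => xS; exists x.
- by move=> x xS; exists (inl x); rewrite ?gS_l.
- by move=> u x u' x' _ _ _ _ /eqP-> /eqP->; rewrite ell.
- by move=> u x _ _ /eqP->.
Qed.

Definition RT (u : pev G) (t : pev q) : bool :=
  match u with inl x => cr x t | inr y => val y == t end.

Lemma RT_exl u : u \in pT G -> exists2 t, t \in pT q & RT u t.
Proof.
case: u => [x|y].
  case: (boolP (x \in pT p)) => [/exl [s c]|nx]; last by rewrite gT_lN.
  by rewrite (gTT c) => sT; exists s.
by rewrite (@gT_r _ p q) => yT; exists (val y); rewrite // /RT eqxx.
Qed.

Lemma RT_exr t : t \in pT q -> exists2 u, u \in pT G & RT u t.
Proof.
move=> tT; case: (boolP (t \in pS q)) => [tS|nt].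
  case: (exr tS) => x c; exists (inl x) => //; by rewrite (gTT c).
by exists (inr (exist _ t nt)); rewrite ?(@gT_r _ p q) /= /RT /=.
Qed.

Lemma RT_evo u t u' t' : u \in pT G -> t \in pT q -> u' \in pT G -> t' \in pT q ->
  RT u t -> RT u' t' -> pevo q t t' = pevo G u u'.
Proof.
case: u => [x|y]; case: u' => [x'|y'] _ _ _ _ c1 c2; simpl in c1, c2.
+ rewrite ell; exact: cevo.
+ by move/eqP: c2 => <-; rewrite (elrT c1).
+ by move/eqP: c1 => <-; rewrite (erlT c2).
+ by move/eqP: c1 => <-; move/eqP: c2 => <-.
Qed.

Lemma RT_lab u t : u \in pT G -> t \in pT q -> RT u t -> plab q t = plab G u.
Proof.
case: u => [x|y] _ _ /=; last by move=> /eqP <-.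
exact: (corr_lab vp vq cpq).
Qed.

Lemma word_gT : word (pT G) = word (pT q).
Proof.
apply: (@word_rel _ G q (pT G) (pT q) RT).
- exact: valid_TOT vG.
- exact: valid_TOT vq.
- exact: RT_exl.
- exact: RT_exr.
- exact: RT_evo.
- exact: RT_lab.
Qed.

Lemma rank_gT u t : u \in pT G -> t \in pT q -> RT u t -> rank (pT G) u = rank (pT q) t.
Proof.
move=> uT tT r.
exact: (proj1 (rel_card_rank (valid_TOT vG) (valid_TOT vq) RT_exl RT_exr RT_evo uT tT r)).
Qed.

Lemma rank_gS t : t \in pS p -> rank (pS G) (inl t) = rank (pS p) t.
Proof.
move=> tS; rewrite /rank.
have -> : [set w in pS G | pevo G w (inl t)] = inl @: [set t' in pS p | pevo p t' t].
  apply/setP=> [[t'|z]]; rewrite inE.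
    by rewrite mem_imset; [rewrite inE gS_l ell | move=> a b [] ].
  rewrite gS_r /=; apply/esym/imsetP=> [[? _]] //.
by rewrite card_imset //; move=> a b [].
Qed.
End GlueValid.
Set Implicit Arguments.
Unset Strict Implicit.
Unset Printing Implicit Defensive.

Section Iso.
Variable Sigma : finType.
Implicit Types P Q R : pom Sigma.

Lemma iso_refl P : pom_iso P P.
Proof.
exists id; split; first exact: (Bijective (g:=id)).
by do !split.
Qed.

Lemma iso_sym P Q : pom_iso P Q -> pom_iso Q P.
Proof.
case=> f [[g fK gK] [hl [he [hb [hS hT]]]]].
exists g; split; first exact: (Bijective gK fK).
split; first by move=> x y; rewrite -hl !gK.
split; first by move=> x y; rewrite -he !gK.
split; first by move=> x; rewrite -hb gK.
split; first by move=> x; rewrite -hS gK.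
by move=> x; rewrite -hT gK.
Qed.

Lemma iso_trans P Q R : pom_iso P Q -> pom_iso Q R -> pom_iso P R.
Proof.
case=> f [fB [fl [fe [fb [fS fT]]]]]; case=> g [gB [gl [ge [gb [gS gT]]]]].
exists (g \o f); split; first exact: bij_comp.
split; first by move=> x y /=; rewrite gl fl.
split; first by move=> x y /=; rewrite ge fe.
split; first by move=> x /=; rewrite gb fb.
split; first by move=> x /=; rewrite gS fS.
by move=> x /=; rewrite gT fT.
Qed.

Lemma rank_bij P Q (A : {set pev P}) (B : {set pev Q}) (f : pev P -> pev Q) :
  bijective f -> (forall x, (f x \in B) = (x \in A)) ->
  (forall x y, pevo Q (f x) (f y) = pevo P x y) ->
  forall x, rank B (f x) = rank A x.
Proof.
move=> fB fAB fe x; rewrite /rank.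
have -> : [set z in B | pevo Q z (f x)] = f @: [set z in A | pevo P z x].
  apply/setP=> z; case: fB => g fK gK.
  rewrite -(gK z) mem_imset ?inE ?fAB ?fe //; exact: can_inj fK.
by rewrite card_imset //; apply: bij_inj.
Qed.

Lemma word_iso k P Q : valid k P -> valid k Q -> pom_iso P Q ->
  word (pS P) = word (pS Q) /\ word (pT P) = word (pT Q).
Proof.
move=> vP vQ [f [fB [fl [fe [fb [fS fT]]]]]].
have gen : forall (A : {set pev P}) (B : {set pev Q}), TO A -> TO B ->
    (forall x, (f x \in B) = (x \in A)) -> word A = word B.
  move=> A B TA TB fAB; apply: (@word_rel _ P Q A B (fun x y => f x == y)) => //.
  - by move=> x xA; exists (f x); rewrite ?fAB.
  - move=> y yB; case: fB => g fK gK; exists (g y); last by rewrite gK.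
    by rewrite -fAB gK.
  - by move=> x y x' y' _ _ _ _ /eqP <- /eqP <-.
  - by move=> x y _ _ /eqP <-.
split; apply: gen => //.
- exact: valid_TOS vP.
- exact: valid_TOS vQ.
- exact: valid_TOT vP.
- exact: valid_TOT vQ.
Qed.

Lemma ex_bij (T T' : finType) (g : T -> T') (P : pred T') : bijective g ->
  [exists s', P s'] = [exists s, P (g s)].
Proof.
case=> g' gK g'K; apply/existsP/existsP=> [[s' H]|[s H]]; last by exists (g s).
by exists (g' s'); rewrite g'K.
Qed.

Lemma iso_glue (p p' q q' : pom Sigma) : pom_iso p p' -> pom_iso q q' -> pom_iso (glue p q) (glue p' q').
Proof.
move=> [f [fB [fl [fe [fb [fS fT]]]]]] [g [gB [gl [ge [gb [gS gT]]]]]].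
have fTr := rank_bij fB fT fe; have gSr := rank_bij gB gS ge.
have ctr : forall x s, corr (f x) (g s) = corr x s.
  by move=> x s; rewrite /corr fT gS fTr gSr.
have H : forall y : {y : pev q | y \notin pS q}, g (val y) \notin pS q'.
  by move=> y; rewrite gS; exact: (valP y).
case: (fB) => f' fK f'K; case: (gB) => g' gK g'K.
have H' : forall y : {y : pev q' | y \notin pS q'}, g' (val y) \notin pS q.
  by move=> y; rewrite -gS g'K; exact: (valP y).
pose h (u : pev (glue p q)) : pev (glue p' q') :=
  match u with inl x => inl (f x) | inr y => inr (exist _ (g (val y)) (H y)) end.
pose h' (u : pev (glue p' q')) : pev (glue p q) :=
  match u with inl x => inl (f' x) | inr y => inr (exist _ (g' (val y)) (H' y)) end.
exists h; split.
  exists h'.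
    by move=> [x|y] /=; [rewrite fK | congr inr; apply: val_inj; rewrite /= gK].
  by move=> [x|y] /=; [rewrite f'K | congr inr; apply: val_inj; rewrite /= g'K].
split.
  move=> [x|y] [x'|y'] /=.
  - rewrite fl (ex_bij _ gB); congr orb; apply: eq_existsb => s.
    rewrite (ex_bij _ gB); apply: eq_existsb => s'.
    by rewrite !ctr gl.
  - rewrite fT (ex_bij _ gB); congr orb; apply: eq_existsb => s.
    by rewrite ctr gl.
  - rewrite (ex_bij _ gB); apply: eq_existsb => s.
    by rewrite ctr gl.
  - by rewrite gl.
split.
  move=> [x|y] [x'|y'] /=.
  - rewrite fe (ex_bij _ gB); congr orb; apply: eq_existsb => s.
    rewrite (ex_bij _ gB); apply: eq_existsb => s'.
    by rewrite !ctr ge.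
  - rewrite (ex_bij _ gB); apply: eq_existsb => s.
    by rewrite ctr ge.
  - rewrite (ex_bij _ gB); apply: eq_existsb => s.
    by rewrite ctr ge.
  - by rewrite ge.
split; first by move=> [x|y] /=; rewrite ?fb ?gb.
split; first by move=> [x|y]; rewrite /= /gS !inE ?fS.
move=> [x|y]; rewrite /= /gT !inE ?gT //.
rewrite (ex_bij _ gB); apply: eq_existsb => s.
by rewrite ctr gT.
Qed.

End Iso.
Set Implicit Arguments.
Unset Strict Implicit.
Unset Printing Implicit Defensive.

Section Ident.
Variable Sigma : finType.

Lemma card_lt_ord n (i : 'I_n) : #|[set z : 'I_n | z < i]| = i.
Proof.
have le : i <= n := ltnW (ltn_ord i).
have -> : [set z : 'I_n | z < i] = [set widen_ord le j | j : 'I_i].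
  apply/setP=> z; rewrite inE; apply/idP/imsetP=> [lt|[j _ ->]] /=.
    by exists (Ordinal lt) => //; apply: val_inj.
  exact: ltn_ord.
rewrite card_imset ?card_ord // => a b /(congr1 val) /= e; exact: val_inj.
Qed.

Lemma rank_idpom (U : seq Sigma) (A : {set pev (idpom U)}) i :
  A = setT -> rank A i = i.
Proof.
move=> ->; rewrite /rank -(card_lt_ord i); apply: eq_card => z; by rewrite !inE.
Qed.

Lemma TO_idpom (U : seq Sigma) (A : {set pev (idpom U)}) : TO A.
Proof.
split; [|split].
- move=> x y _ _ ne /=; by rewrite -neq_ltn.
- by move=> x _ /=; rewrite ltnn.
- move=> x y z _ _ _ /=; exact: ltn_trans.
Qed.

Lemma word_idpom (U : seq Sigma) : word (pS (idpom U)) = U /\ word (pT (idpom U)) = U.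
Proof.
have gen : forall A : {set pev (idpom U)}, A = setT -> word A = U.
  move=> A eA; have sz : size (word A) = size U by rewrite word_size eA cardsT card_ord.
  case: U A eA sz => [|a U'] A eA sz; first by case: (word A) sz.
  apply: (@eq_from_nth _ a) => // i; rewrite sz => lti.
  have := @word_nth Sigma (idpom (a :: U')) A (Ordinal lti) a (TO_idpom A); rewrite eA in_setT => /(_ isT).
  by rewrite rank_idpom //= => ->; rewrite (tnth_nth a).
by split; apply: gen.
Qed.

Lemma idpom_valid k (U : seq Sigma) : size U <= k -> valid k (idpom U).
Proof.
move=> sk; split; first by [].
split; first by [].
split; first by [].
split; first by move=> x y /= lt; rewrite andbT; apply/eqP=> e; rewrite e ltnn in lt.
split; first by move=> x y ne _ _ /=; rewrite -neq_ltn.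
split; first by apply: (@height_acyc _ _ (fun i : 'I_(size U) => val i)).
split; first by [].
split; first by [].
move=> A _; apply: leq_trans (max_card _) _; by rewrite card_ord.
Qed.

Lemma absurd_id (U : seq Sigma) (y : {y : pev (idpom U) | y \notin pS (idpom U)}) : False.
Proof. by case: y => y /=; rewrite in_setT. Qed.

Lemma glue_id k (p : pom Sigma) : valid k p ->
  pom_iso p (glue p (idpom (word (pT p)))).
Proof.
move=> vp; set U := word (pT p); set I := idpom U.
have TT := valid_TOT vp.
have corrE : forall x (i : pev I), corr x i = (x \in pT p) && (rank (pT p) x == i).
  by move=> x i; rewrite /corr in_setT rank_idpom.
exists inl; split.
  exists (fun u : pev (glue p I) => match u with inl x => x | inr y => False_rect _ (absurd_id y) end) => //.
  by case=> [x|y] //; case: (absurd_id y).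
split.
  move=> x y /=; case: (plt p x y) => //=.
  by apply/existsP=> [[s /existsP[s' /and3P[]]]].
split.
  move=> x y /=; case e: (pevo p x y) => //=.
  apply/existsP=> [[s /existsP[s' /and3P[]]]].
  rewrite !corrE => /andP[xT /eqP rx] /andP[yT /eqP ry] lt.
  by move: e; rewrite -(rank_ltE TT xT yT) rx ry lt.
split; first by [].
split; first by move=> x; rewrite /= /gS inE.
move=> x; rewrite /= /gT inE; apply/existsP/idP=> [[s /andP[]]|xT].
  by rewrite corrE => /andP[].
have lt : rank (pT p) x < size U by rewrite word_size; exact: rank_bound.
by exists (Ordinal lt); rewrite corrE xT eqxx in_setT.
Qed.

End Ident.
Set Implicit Arguments.
Unset Strict Implicit.
Unset Printing Implicit Defensive.

Section Assoc.
Variable Sigma : finType.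
Variable k : nat.
Variables A B C : pom Sigma.
Hypotheses (vA : valid k A) (vB : valid k B) (vC : valid k C).
Hypothesis cAB : word (pT A) = word (pS B).
Hypothesis cBC : word (pT B) = word (pS C).
Local Notation AB := (glue A B).
Local Notation BC := (glue B C).
Local Notation X := (glue AB C).
Local Notation Y := (glue A BC).
Let vAB := glue_valid vA vB cAB.
Let vBC := glue_valid vB vC cBC.
Lemma cX : word (pT AB) = word (pS C).
Proof. by rewrite (word_gT vA vB cAB). Qed.
Lemma cY : word (pT A) = word (pS BC).
Proof. by rewrite (word_gS vB vC cBC). Qed.

Local Notation crAB := (@corr Sigma A B).
Local Notation crBC := (@corr Sigma B C).
Local Notation crX := (@corr Sigma AB C).
Local Notation crY := (@corr Sigma A BC).

Lemma K1 x t : crY x (inl t) = crAB x t.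
Proof.
case tS: (t \in pS B); last by rewrite /corr gS_l tS !andbF.
by rewrite /corr gS_l tS (rank_gS vB vC tS).
Qed.

Lemma K1r x z : crY x (inr z) = false.
Proof. by rewrite /corr gS_r andbF. Qed.

Lemma K2l x s : crX (inl x) s = [exists t, crAB x t && crBC t s].
Proof.
apply/idP/existsP.
  case/and3P=> uT sS /eqP r.
  have xT : x \in pT A by apply/negP=> /negP nx; rewrite (gT_lN _ nx) in uT.
  case: (corr_exl vA vB cAB xT) => t c; exists t; rewrite c /=.
  have tT : t \in pT B by rewrite -(gT_lT vB c).
  by rewrite /corr tT sS -(rank_gT vA vB cAB uT tT c) r eqxx.
case=> t /andP[c /and3P[tT sS /eqP r]].
have uT : inl x \in pT AB by rewrite (gT_lT vB c).
by rewrite /corr uT sS (rank_gT vA vB cAB uT tT c) r eqxx.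
Qed.

Lemma K2r y s : crX (inr y) s = crBC (val y) s.
Proof.
case yT: (val y \in pT B); last by rewrite /corr gT_r yT.
have uT : inr y \in pT AB by rewrite gT_r.
by rewrite /corr uT yT (rank_gT vA vB cAB uT yT) // /RT eqxx.
Qed.

Lemma P1 (y : {y : pev B | y \notin pS B}) : (inl (val y) : pev BC) \notin pS BC.
Proof. by rewrite gS_l (valP y). Qed.
Lemma P2 (z : {z : pev C | z \notin pS C}) : (inr z : pev BC) \notin pS BC.
Proof. by rewrite gS_r. Qed.

Definition phiA (u : pev X) : pev Y :=
  match u with
  | inl (inl x) => inl x
  | inl (inr y) => inr (exist _ (inl (val y)) (P1 y))
  | inr z => inr (exist _ (inr z) (P2 z))
  end.

Lemma phi_a x : phiA (inl (inl x)) = inl x. Proof. by []. Qed.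
Lemma phi_b y : phiA (inl (inr y)) = inr (exist _ (inl (val y)) (P1 y)). Proof. by []. Qed.
Lemma phi_c z : phiA (inr z) = inr (exist _ (inr z) (P2 z)). Proof. by []. Qed.

Lemma phi_inj : injective phiA.
Proof.
pose g (v : pev Y) := match v with inl _ => None | inr w => Some (val w) end.
move=> [[x|y]|z] [[x'|y']|z'] //= e; have := congr1 g e; rewrite /g /= => //.
- by case: e => ->.
- by case=> /val_inj ->.
- by case=> ->.
Qed.

Lemma phi_surj v : exists u, phiA u = v.
Proof.
case: v => [x|[w H]]; first by exists (inl (inl x)).
case: w H => [y|z] H.
  have H' : y \notin pS B by rewrite -(@gS_l _ B C).
  exists (inl (inr (exist _ y H'))); rewrite phi_b; congr inr; exact: val_inj.
exists (inr z); rewrite phi_c; congr inr; exact: val_inj.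
Qed.

Lemma phi_bij : bijective phiA.
Proof.
apply: inj_card_bij; first exact: phi_inj.
rewrite -cardsT -(cardsT (pev X)).
apply: leq_trans (leq_imset_card phiA _); apply: subset_leq_card.
apply/subsetP=> v _; case: (phi_surj v) => u <-; exact: imset_f.
Qed.


Let X_ll := @gltE_ll _ k AB C vC.
Let X_rl := @gltE_rl _ k AB C vC.
Let X_rr := @gltE_rr _ AB C.
Let X_lrN := @glt_lrN _ AB C.
Let X_lrT := @glt_lrT _ k AB C vC.
Let Y_ll := @gltE_ll _ k A BC vBC.
Let Y_rl := @gltE_rl _ k A BC vBC.
Let Y_rr := @gltE_rr _ A BC.
Let Y_lrN := @glt_lrN _ A BC.
Let Y_lrT := @glt_lrT _ k A BC vBC.
Let AB_ll := @gltE_ll _ k A B vB.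
Let AB_rl := @gltE_rl _ k A B vB.
Let AB_rr := @gltE_rr _ A B.
Let AB_lrN := @glt_lrN _ A B.
Let AB_lrT := @glt_lrT _ k A B vB.
Let BC_ll := @gltE_ll _ k B C vC.
Let BC_rl := @gltE_rl _ k B C vC.
Let BC_rr := @gltE_rr _ B C.
Let BC_lrN := @glt_lrN _ B C.
Let BC_lrT := @glt_lrT _ k B C vC.
Let X_ell := @gevoE_ll _ k AB C vAB vC.
Let X_err := @gevoE_rr _ AB C.
Let X_elrN := @gevo_lrN _ AB C.
Let X_erlN := @gevo_rlN _ AB C.
Let X_elrT := @gevo_lrT _ k AB C vC.
Let X_erlT := @gevo_rlT _ k AB C vC.
Let Y_ell := @gevoE_ll _ k A BC vA vBC.
Let Y_err := @gevoE_rr _ A BC.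
Let Y_elrN := @gevo_lrN _ A BC.
Let Y_erlN := @gevo_rlN _ A BC.
Let Y_elrT := @gevo_lrT _ k A BC vBC.
Let Y_erlT := @gevo_rlT _ k A BC vBC.
Let AB_ell := @gevoE_ll _ k A B vA vB.
Let AB_err := @gevoE_rr _ A B.
Let AB_elrN := @gevo_lrN _ A B.
Let AB_erlN := @gevo_rlN _ A B.
Let AB_elrT := @gevo_lrT _ k A B vB.
Let AB_erlT := @gevo_rlT _ k A B vB.
Let BC_ell := @gevoE_ll _ k B C vB vC.
Let BC_err := @gevoE_rr _ B C.
Let BC_elrN := @gevo_lrN _ B C.
Let BC_erlN := @gevo_rlN _ B C.
Let BC_elrT := @gevo_lrT _ k B C vC.
Let BC_erlT := @gevo_rlT _ k B C vC.
Let X_gTN := @gT_lN _ AB C.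
Let X_gTT := @gT_lT _ k AB C vC.
Let Y_gTN := @gT_lN _ A BC.
Let Y_gTT := @gT_lT _ k A BC vBC.
Let BC_gTN := @gT_lN _ B C.
Let BC_gTT := @gT_lT _ k B C vC.

Lemma a_cases x : [\/ (x \notin pT A) /\ (inl x \notin pT AB),
   exists t, [/\ crAB x t, crY x (inl t), t \notin pT B & inl x \notin pT AB] |
   exists t s, [/\ crAB x t, crY x (inl t), crBC t s & crX (inl x) s]].
Proof.
case: (boolP (x \in pT A)) => [xT|nx]; last by apply: Or31; rewrite (gT_lN _ nx).
case: (corr_exl vA vB cAB xT) => t c.
have cy : crY x (inl t) by rewrite K1.
case: (boolP (t \in pT B)) => [tT|nt].
  case: (corr_exl vB vC cBC tT) => s c'; apply: Or33; exists t, s; split=> //.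
  by rewrite K2l; apply/existsP; exists t; rewrite c c'.
apply: Or32; exists t; split=> //; by rewrite (gT_lT vB c).
Qed.

Lemma b_cases (y : {y : pev B | y \notin pS B}) :
  ((val y \notin pT B) /\ ((inr y : pev AB) \notin pT AB)) \/
  exists s, crBC (val y) s /\ crX (inr y) s.
Proof.
case: (boolP (val y \in pT B)) => [yT|ny]; last by left; rewrite gT_r.
case: (corr_exl vB vC cBC yT) => s c; right; exists s; by rewrite K2r.
Qed.

Lemma glue_assoc : pom_iso X Y.
Proof.
exists phiA; split; first exact: phi_bij.
split.
  move=> [[x|y]|z] [[x'|y']|z'].
  - by rewrite phi_a phi_a Y_ll X_ll AB_ll.
  - rewrite phi_a phi_b X_ll.
    case: (a_cases x) => [[nx _]|[t [c cy _ _]]|[t [s [c cy _ _]]]].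
    + by rewrite (Y_lrN _ nx) (AB_lrN _ nx).
    + by rewrite (Y_lrT cy) (AB_lrT c) BC_ll.
    + by rewrite (Y_lrT cy) (AB_lrT c) BC_ll.
  - rewrite phi_a phi_c.
    case: (a_cases x) => [[nx nAB]|[t [c cy nt nAB]]|[t [s [c cy c' cx]]]].
    + by rewrite (Y_lrN _ nx) (X_lrN _ nAB).
    + by rewrite (Y_lrT cy) (X_lrN _ nAB) (BC_lrN _ nt).
    + by rewrite (Y_lrT cy) (X_lrT cx) (BC_lrT c').
  - by rewrite phi_b phi_a X_ll AB_rl Y_rl.
  - by rewrite phi_b phi_b X_ll AB_rr Y_rr BC_ll.
  - rewrite phi_b phi_c Y_rr.
    case: (b_cases y) => [[ny nAB]|[s [c cx]]].
    + by rewrite (X_lrN _ nAB) (BC_lrN _ ny).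
    + by rewrite (X_lrT cx) (BC_lrT c).
  - by rewrite phi_c phi_a X_rl Y_rl.
  - by rewrite phi_c phi_b X_rl Y_rr BC_rl.
  - by rewrite phi_c phi_c X_rr Y_rr BC_rr.
split.
  move=> [[x|y]|z] [[x'|y']|z'].
  - by rewrite phi_a phi_a Y_ell X_ell AB_ell.
  - rewrite phi_a phi_b X_ell.
    case: (a_cases x) => [[nx _]|[t [c cy _ _]]|[t [s [c cy _ _]]]].
    + by rewrite (Y_elrN _ nx) (AB_elrN _ nx).
    + by rewrite (Y_elrT cy) (AB_elrT c) BC_ell.
    + by rewrite (Y_elrT cy) (AB_elrT c) BC_ell.
  - rewrite phi_a phi_c.
    case: (a_cases x) => [[nx nAB]|[t [c cy nt nAB]]|[t [s [c cy c' cx]]]].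
    + by rewrite (Y_elrN _ nx) (X_elrN _ nAB).
    + by rewrite (Y_elrT cy) (X_elrN _ nAB) (BC_elrN _ nt).
    + by rewrite (Y_elrT cy) (X_elrT cx) (BC_elrT c').
  - rewrite phi_b phi_a X_ell.
    case: (a_cases x') => [[nx _]|[t [c cy _ _]]|[t [s [c cy _ _]]]].
    + by rewrite (Y_erlN _ nx) (AB_erlN _ nx).
    + by rewrite (Y_erlT cy) (AB_erlT c) BC_ell.
    + by rewrite (Y_erlT cy) (AB_erlT c) BC_ell.
  - by rewrite phi_b phi_b X_ell AB_err Y_err BC_ell.
  - rewrite phi_b phi_c Y_err.
    case: (b_cases y) => [[ny nAB]|[s [c cx]]].
    + by rewrite (X_elrN _ nAB) (BC_elrN _ ny).
    + by rewrite (X_elrT cx) (BC_elrT c).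
  - rewrite phi_c phi_a.
    case: (a_cases x') => [[nx nAB]|[t [c cy nt nAB]]|[t [s [c cy c' cx]]]].
    + by rewrite (Y_erlN _ nx) (X_erlN _ nAB).
    + by rewrite (Y_erlT cy) (X_erlN _ nAB) (BC_erlN _ nt).
    + by rewrite (Y_erlT cy) (X_erlT cx) (BC_erlT c').
  - rewrite phi_c phi_b Y_err.
    case: (b_cases y') => [[ny nAB]|[s [c cx]]].
    + by rewrite (X_erlN _ nAB) (BC_erlN _ ny).
    + by rewrite (X_erlT cx) (BC_erlT c).
  - by rewrite phi_c phi_c X_err Y_err BC_err.
split; first by move=> [[x|y]|z].
split.
  move=> [[x|y]|z].
  - by rewrite phi_a !gS_l.
  - by rewrite phi_b (@gS_r _ A BC) gS_l (@gS_r _ A B).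
  - by rewrite phi_c (@gS_r _ A BC) (@gS_r _ AB C).
move=> [[x|y]|z].
- rewrite phi_a.
  case: (a_cases x) => [[nx nAB]|[t [c cy nt nAB]]|[t [s [c cy c' cx]]]].
  + by rewrite (Y_gTN nx) (X_gTN nAB).
  + by rewrite (Y_gTT cy) (BC_gTN nt) (X_gTN nAB).
  + by rewrite (Y_gTT cy) (BC_gTT c') (X_gTT cx).
- rewrite phi_b (@gT_r _ A BC) /=.
  case: (b_cases y) => [[ny nAB]|[s [c cx]]].
  + by rewrite (BC_gTN ny) (X_gTN nAB).
  + by rewrite (BC_gTT c) (X_gTT cx).
- by rewrite phi_c (@gT_r _ A BC) (@gT_r _ AB C) /= (@gT_r _ B C).
Qed.

End Assoc.
Set Implicit Arguments.
Unset Strict Implicit.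
Unset Printing Implicit Defensive.

Section Classes.
Variable Sigma : finType.
Variable k : nat.
Local Notation I := (iipk Sigma k).

Lemma rep_spec (a : I) : valid k (rep a) /\ proj1_sig a = pom_iso (rep a).
Proof. by rewrite /rep; case: constructive_indefinite_description. Qed.

Lemma iso_classE (p q : pom Sigma) : pom_iso p = pom_iso q -> pom_iso p q.
Proof. by move=> e; rewrite e; apply: iso_refl. Qed.

Lemma iso_classI (p q : pom Sigma) : pom_iso p q -> pom_iso p = pom_iso q.
Proof.
move=> h; apply: functional_extensionality => r; apply: propositional_extensionality.
split=> h'; first exact: iso_trans (iso_sym h) h'.
exact: iso_trans h h'.
Qed.

Lemma iip_eq (a b : I) : pom_iso (rep a) (rep b) -> a = b.
Proof.
move=> h.
have e : proj1_sig a = proj1_sig b.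
  by rewrite (proj2 (rep_spec a)) (proj2 (rep_spec b)); apply: iso_classI.
move: a b e {h} => [A hA] [B hB] /= e; subst B; congr exist; exact: proof_irrelevance.
Qed.

Lemma rep_iso_class (p : pom Sigma) (h : exists q, valid k q /\ pom_iso p = pom_iso q) :
  pom_iso (rep (exist _ (pom_iso p) h : I)) p.
Proof.
have [_ e] := rep_spec (exist _ (pom_iso p) h : I); simpl in e.
exact: iso_sym (iso_classE e).
Qed.

Lemma icomp_spec (a b : I) : itgt a = isrc b ->
  valid k (glue (rep a) (rep b)) /\ pom_iso (rep (icomp a b)) (glue (rep a) (rep b)).
Proof.
move=> c; have va := proj1 (rep_spec a); have vb := proj1 (rep_spec b).
have vg := glue_valid va vb c.
split=> //; rewrite /icomp; case: excluded_middle_informative => [h|n].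
  exact: rep_iso_class.
by case: n; exists (glue (rep a) (rep b)).
Qed.

Lemma icomp_src (a b : I) : itgt a = isrc b -> isrc (icomp a b) = isrc a.
Proof.
move=> c; have [vg h] := icomp_spec c.
rewrite /isrc (proj1 (word_iso (proj1 (rep_spec _)) vg h)).
exact: word_gS (proj1 (rep_spec a)) (proj1 (rep_spec b)) c.
Qed.

Lemma icomp_tgt (a b : I) : itgt a = isrc b -> itgt (icomp a b) = itgt b.
Proof.
move=> c; have [vg h] := icomp_spec c.
rewrite /itgt (proj2 (word_iso (proj1 (rep_spec _)) vg h)).
exact: word_gT (proj1 (rep_spec a)) (proj1 (rep_spec b)) c.
Qed.

Lemma icomp_assoc (a b c : I) : itgt a = isrc b -> itgt b = isrc c ->
  icomp (icomp a b) c = icomp a (icomp b c).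
Proof.
move=> hab hbc.
have va := proj1 (rep_spec a); have vb := proj1 (rep_spec b); have vc := proj1 (rep_spec c).
have h1 : itgt (icomp a b) = isrc c by rewrite icomp_tgt.
have h2 : itgt a = isrc (icomp b c) by rewrite icomp_src.
apply: iip_eq.
apply: iso_trans (proj2 (icomp_spec h1)) _.
apply: iso_trans (iso_glue (proj2 (icomp_spec hab)) (iso_refl _)) _.
apply: iso_trans (glue_assoc va vb vc hab hbc) _.
apply: iso_trans (iso_glue (iso_refl _) (iso_sym (proj2 (icomp_spec hbc)))) _.
exact: iso_sym (proj2 (icomp_spec h2)).
Qed.

Lemma size_wordT (p : pom Sigma) : valid k p -> size (word (pT p)) <= k.
Proof.
move=> vp; rewrite word_size; apply: (valid_w vp); apply/antiP=> x y xT _.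
exact: (valid_T vp xT).
Qed.

Lemma id_src (a e : I) : is_id e (itgt a) -> isrc e = itgt a /\ pom_iso (rep e) (idpom (itgt a)).
Proof.
move=> ie; have [ve se] := rep_spec e.
have vI : valid k (idpom (itgt a)) by apply: idpom_valid; apply: size_wordT (proj1 (rep_spec a)).
have h : pom_iso (rep e) (idpom (itgt a)).
  by apply: iso_sym; apply: iso_classE; rewrite -ie se.
split=> //; rewrite /isrc (proj1 (word_iso ve vI h)).
exact: (proj1 (word_idpom _)).
Qed.

Lemma icomp_id (a e : I) : is_id e (itgt a) -> icomp a e = a.
Proof.
move=> ie; have [se h] := id_src ie.
have c : itgt a = isrc e by rewrite se.
apply: iip_eq.
apply: iso_trans (proj2 (icomp_spec c)) _.
apply: iso_trans (iso_glue (iso_refl _) h) _.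
exact: iso_sym (glue_id (proj1 (rep_spec a))).
Qed.

Lemma id_exists (a : I) : exists e : I, is_id e (itgt a).
Proof.
have vI : valid k (idpom (itgt a)) by apply: idpom_valid; apply: size_wordT (proj1 (rep_spec a)).
by exists (exist _ (pom_iso (idpom (itgt a))) (ex_intro _ (idpom (itgt a)) (conj vI erefl))).
Qed.

Variable L : I -> Prop.

Lemma srep_spec (t : suff L) : proj1_sig t = quo L (srep t).
Proof. by rewrite /srep; case: constructive_indefinite_description. Qed.

Lemma suff_eq (t t' : suff L) : proj1_sig t = proj1_sig t' -> t = t'.
Proof.
move: t t' => [A hA] [B hB] /= e; subst B; congr exist; exact: proof_irrelevance.
Qed.

Lemma srep_phi (t : suff L) : t = phi L (srep t).
Proof. by apply: suff_eq; rewrite srep_spec. Qed.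

Lemma srep_quo (P : I) : quo L (srep (phi L P)) = quo L P.
Proof. by rewrite -srep_spec. Qed.

Lemma ssrcE (t : suff L) : ssrc t = isrc (srep t).
Proof. by rewrite /ssrc srep_spec. Qed.
Lemma stgtE (t : suff L) : stgt t = itgt (srep t).
Proof. by rewrite /stgt srep_spec. Qed.

Lemma quo_ext (P P' : I) : isrc P = isrc P' -> itgt P = itgt P' ->
  (forall Q, isrc Q = itgt P -> (L (icomp P Q) <-> L (icomp P' Q))) ->
  quo L P = quo L P'.
Proof.
move=> hs ht hL; rewrite /quo hs ht; congr pair.
apply: functional_extensionality => Q; apply: propositional_extensionality.
split=> [[e h]|[e h]]; split=> //; first by apply/(hL Q _).1 => //; rewrite e ht.
by apply/(hL Q _).2 => //; rewrite e ht.
Qed.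

Lemma quo_comp (P P' Q : I) : quo L P = quo L P' -> itgt P = isrc Q ->
  quo L (icomp P Q) = quo L (icomp P' Q).
Proof.
move=> e c.
have hs : isrc P = isrc P' by have := congr1 (fun t => t.1.1) e.
have ht : itgt P = itgt P' by have := congr1 (fun t => t.1.2) e.
have hF := congr1 (fun t => t.2) e; simpl in hF.
have c' : itgt P' = isrc Q by rewrite -ht.
apply: quo_ext.
- by rewrite !icomp_src.
- by rewrite !icomp_tgt.
- move=> R hR; rewrite icomp_tgt // in hR.
  rewrite !icomp_assoc //.
  have hQR : isrc (icomp Q R) = itgt P by rewrite icomp_src // hR.
  have := congr1 (fun f => f (icomp Q R)) hF => /= E.
  split=> h.
    have : isrc (icomp Q R) = itgt P /\ L (icomp P (icomp Q R)) by [].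
    by rewrite E => -[].
  have : isrc (icomp Q R) = itgt P' /\ L (icomp P' (icomp Q R)) by rewrite -ht.
  by rewrite -E => -[].
Qed.

Lemma phi_hom (P Q : I) : itgt P = isrc Q -> phi L (icomp P Q) = sact (phi L P) Q.
Proof.
move=> c; rewrite /sact; apply: suff_eq => /=.
by apply: quo_comp => //; rewrite srep_quo.
Qed.

End Classes.
Unset Implicit Arguments.
Set Strict Implicit.
Set Printing Implicit Defensive.

Theorem mainTheorem5 (Sigma : finType) (k : nat) (L : iipk Sigma k -> Prop) :
  is_module (@ssrc _ _ L) (@stgt _ _ L) (@sact _ _ L) /\
  is_hom (@isrc Sigma k) (@itgt Sigma k) (@icomp Sigma k)
         (@ssrc _ _ L) (@stgt _ _ L) (@sact _ _ L) (phi L) /\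
  (forall P, L P <-> Jset (phi L P)) /\
  (forall (M : Type) (msrc mtgt : M -> seq Sigma) (act : M -> iipk Sigma k -> M)
          (K : M -> Prop) (psi : iipk Sigma k -> M),
     is_module msrc mtgt act ->
     is_hom (@isrc Sigma k) (@itgt Sigma k) (@icomp Sigma k) msrc mtgt act psi ->
     (forall m, exists P, psi P = m) ->
     (forall P, L P <-> K (psi P)) ->
     exists f : M -> suff L,
       is_hom msrc mtgt act (@ssrc _ _ L) (@stgt _ _ L) (@sact _ _ L) f /\
       (forall t, exists m, f m = t) /\
       (forall t, Jset t <-> exists m, K m /\ f m = t) /\
       (forall P, f (psi P) = phi L P)).
Proof.
have homphi : is_hom (@isrc Sigma k) (@itgt Sigma k) (@icomp Sigma k)
         (@ssrc _ _ L) (@stgt _ _ L) (@sact _ _ L) (phi L).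
  split; first by [].
  by move=> m a c; apply: phi_hom.
split.
  split.
  - move=> m a c; rewrite /sact /ssrc /stgt /=.
    rewrite stgtE in c; rewrite -/(ssrc m) ssrcE.
    by rewrite icomp_src // icomp_tgt.
  - move=> m a ie; rewrite /sact; rewrite stgtE in ie.
    by rewrite (icomp_id ie) -srep_phi.
  - move=> m a b c1 c2; rewrite stgtE in c1.
    change (sact (phi L (icomp (srep m) a)) b = phi L (icomp (srep m) (icomp a b))).
    rewrite -phi_hom; last by rewrite icomp_tgt.
    by rewrite icomp_assoc.
split; first exact: homphi.
split.
  move=> P; split; first by move=> LP; exists P.
  case=> P' [LP' e].
  have eq := congr1 (@proj1_sig _ _) e; simpl in eq.
  have ht : itgt P = itgt P' by have := congr1 (fun t => t.1.2) eq.
  have hF := congr1 (fun t => t.2) eq; simpl in hF.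
  case: (id_exists P) => e0 ie0.
  have ie0' : is_id e0 (itgt P') by rewrite -ht.
  have [se0 _] := id_src ie0.
  have : isrc e0 = itgt P' /\ L (icomp P' e0) by rewrite (icomp_id ie0') -ht.
  rewrite -(congr1 (fun f => f e0) hF) => -[_].
  by rewrite (icomp_id ie0).
move=> M msrc mtgt act K psi _ [hpsi1 hpsi2] surj LK.
have wd : forall P P', psi P = psi P' -> phi L P = phi L P'.
  move=> P P' e; apply: suff_eq => /=.
  have [s1 t1] := hpsi1 P; have [s2 t2] := hpsi1 P'.
  apply: quo_ext.
  - by rewrite -s1 -s2 e.
  - by rewrite -t1 -t2 e.
  - move=> Q hQ; rewrite !LK hpsi2; last by rewrite hQ.
    rewrite hpsi2; last by rewrite hQ -t1 -t2 e.
    by rewrite e.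
pose pre (m : M) : iipk Sigma k := proj1_sig (constructive_indefinite_description _ (surj m)).
have preP : forall m, psi (pre m) = m.
  by move=> m; rewrite /pre; case: constructive_indefinite_description.
pose f (m : M) := phi L (pre m).
have fpsi : forall P0, f (psi P0) = phi L P0 by move=> P0; apply: wd; rewrite preP.
exists f; split.
  split.
    move=> m; rewrite /f /ssrc /stgt /=; have [s1 t1] := hpsi1 (pre m).
    by rewrite -s1 -t1 preP.
  move=> m a c; rewrite -{1}(preP m) -hpsi2; last by have [_ t1] := hpsi1 (pre m); rewrite -t1 preP.
  rewrite fpsi; apply: phi_hom.
  by have [_ t1] := hpsi1 (pre m); rewrite -t1 preP.
split.
  move=> t; exists (psi (srep t)); by rewrite fpsi -srep_phi.
split; last exact: fpsi.
move=> t; split.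
  case=> P [LP ->]; exists (psi P); split; first by apply/LK.
  exact: fpsi.
case=> m [Km <-]; exists (pre m); split=> //.
by apply/LK; rewrite preP.
Qed.
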